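(* Let $n\ge 3$, and let $\Omega_n$, the perimeter $p:\Omega_n\to\mathbb{R}$, the area $\mathcal A:\Omega_n\to\mathbb{R}$ and $\Psi=(p,\mathcal A):\Omega_n\to\mathbb{R}^2$ be as in the context. Then: (1) $p$ and $\mathcal A$ are submersions on $\Omega_n$; hence the level sets of $p$ (resp. of $\mathcal A$) are the leaves of a codimension $1$ foliation $\mathcal F_p$ (resp. $\mathcal F_a$) on $\Omega_n$. (2) For $\omega\in\Omega_n$, the differential $d\Psi(\omega)$ has rank $2$ if the polygon associated with $\omega$ is not regular, and rank $1$ if it is regular. Consequently $\Psi$ defines a codimension $2$ foliation $\mathcal F$ on the open subset of $\Omega_n$ consisting of the $\omega$ whose associated polygon is not regular, whose leaves are the level sets of $\Psi$ there.
   Context: Let $\mathcal V=\{(x,y,z)\in\mathbb{R}^3: 0<x<y+z,\ 0<y<x+z,\ 0<z<x+y\}$. For $(t,x,s)\in\mathcal V$ let $\alpha(t,x,s)=\arccos\frac{t^2+s^2-x^2}{2ts}\in\,]0,\pi[$ (the angle opposite the side $x$ in a triangle with sides $t,x,s$). Let $$\Omega_n=\Big\{\omega=(t_1,x_1,t_2,x_2,\dots,t_{n-2},x_{n-2},t_{n-1})\in(\mathbb{R}_{>0})^{2n-3}:\ (t_k,x_k,t_{k+1})\in\mathcal V \ (1\le k\le n-2),\ \sum_{k=1}^{n-2}\alpha(t_k,x_k,t_{k+1})<2\pi\Big\}.$$ To $\omega$ associate the planar polygon $(M_1,\dots,M_n)$ with $M_n=O$, $M_k=t_k(\cos\theta_k,\sin\theta_k)$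 ($1\le k\le n-1$), $\theta_1=0$, $\theta_{k+1}=\theta_k+\alpha(t_k,x_k,t_{k+1})$; so $t_k=M_nM_k$, $x_k=M_kM_{k+1}$, the side lengths are $t_1,x_1,\dots,x_{n-2},t_{n-1}$ (the polygon is star-shaped with respect to $M_n$). Perimeter: $p(\omega)=t_1+x_1+x_2+\dots+x_{n-2}+t_{n-1}$. Area: $\mathcal A(\omega)=\sum_{k=1}^{n-2}\frac14\sqrt{f(t_k,x_k,t_{k+1})}$ with $f(x,y,z)=(x+y+z)(-x+y+z)(x-y+z)(x+y-z)$ (Heron's formula for the triangles $M_nM_kM_{k+1}$). A polygon is equilateral if all its sides have the same length, inscribable if all its vertices lie on a common circle, and regular if it is both. *)

(* Defs.v *)
From HB Require Import structures.
From mathcomp Require Import all_boot all_order all_algebra.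
From mathcomp Require Import all_classical all_reals all_analysis.
Set Implicit Arguments. Unset Strict Implicit. Unset Printing Implicit Defensive.
Import Order.TTheory GRing.Theory Num.Theory.
Import numFieldNormedType.Exports.
Local Open Scope classical_set_scope.
Local Open Scope ring_scope.

Section Polygons.
Variable R : realType.

Definition inV (x y z : R) : Prop :=
  (0 < x /\ x < y + z) /\ (0 < y /\ y < x + z) /\ (0 < z /\ z < x + y).

Definition alpha (t x s : R) : R := acos ((t ^+ 2 + s ^+ 2 - x ^+ 2) / (2 * t * s)).

Definition heron (x y z : R) : R :=
  (x + y + z) * (- x + y + z) * (x - y + z) * (x + y - z).

(* k-th coordinate (0-based) of a row vector, 0 if out of range *)
Definition coord m (w : 'rV[R]_m) (k : nat) : R :=
  match @insub nat (fun i => (i < m)%N) 'I_m k with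
  | Some i => w ord0 i
  | None => 0
  end.

(* omega = (t_1, x_1, ..., x_{n-2}, t_{n-1}); with 0-based indices
   tt w k = t_{k+1} = coordinate 2k,  xx w k = x_{k+1} = coordinate 2k+1 *)
Definition tt m (w : 'rV[R]_m) (k : nat) : R := coord w (2 * k).
Definition xx m (w : 'rV[R]_m) (k : nat) : R := coord w (2 * k).+1.

Definition Omega (n : nat) (w : 'rV[R]_(2 * n - 3)) : Prop :=
  (forall i, 0 < w ord0 i) /\
  (forall k, (k < n - 2)%N -> inV (tt w k) (xx w k) (tt w k.+1)) /\
  \sum_(k < n - 2) alpha (tt w k) (xx w k) (tt w k.+1) < 2 * pi.

Definition perim (n : nat) (w : 'rV[R]_(2 * n - 3)) : R :=
  tt w 0 + \sum_(k < n - 2) xx w k + tt w (n - 2).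

(* area, sum of Heron areas of the triangles M_n M_k M_{k+1} *)
Definition area (n : nat) (w : 'rV[R]_(2 * n - 3)) : R :=
  \sum_(k < n - 2) (Num.sqrt (heron (tt w k) (xx w k) (tt w k.+1)) / 4).

Definition Psi (n : nat) (w : 'rV[R]_(2 * n - 3)) : 'rV[R]_2 :=
  \row_(i < 2) (if i == ord0 then perim w else area w).

(* theta_{k+1} (0-based k): theta_1 = 0, theta_{k+1} = theta_k + alpha_k *)
Definition theta m (w : 'rV[R]_m) (k : nat) : R :=
  \sum_(j < k) alpha (tt w j) (xx w j) (tt w j.+1).

(* vertices: vertex k = M_{k+1} for k < n-1, and vertex (n-1) = M_n = O *)
Definition vertex (n : nat) (w : 'rV[R]_(2 * n - 3)) (k : 'I_n) : R * R :=
  if (k < n - 1)%N then (tt w k * cos (theta w k), tt w k * sin (theta w k))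
  else (0, 0).

(* the sides have lengths t_1, x_1, ..., x_{n-2}, t_{n-1} *)
Definition equilateral (n : nat) (w : 'rV[R]_(2 * n - 3)) : Prop :=
  (forall k, (k < n - 2)%N -> xx w k = tt w 0) /\ tt w (n - 2) = tt w 0.

Definition inscribable (n : nat) (w : 'rV[R]_(2 * n - 3)) : Prop :=
  exists (c : R * R) (r : R), forall k : 'I_n,
    ((vertex w k).1 - c.1) ^+ 2 + ((vertex w k).2 - c.2) ^+ 2 = r ^+ 2.

Definition regular (n : nat) (w : 'rV[R]_(2 * n - 3)) : Prop :=
  equilateral w /\ inscribable w.

End Polygons.

(* Main.v *)
Require Import Defs.
From HB Require Import structures.
From mathcomp Require Import all_boot all_order all_algebra.
From mathcomp Require Import all_classical all_reals all_analysis.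
From mathcomp Require Import ring lra zify.
Set Implicit Arguments. Unset Strict Implicit. Unset Printing Implicit Defensive.
Import Order.TTheory GRing.Theory Num.Theory.
Import numFieldNormedType.Exports.
Local Open Scope classical_set_scope.
Local Open Scope ring_scope.

Section Trig.
Variable R : realType.

Lemma heron_pos (a b c : R) : inV a b c -> 0 < heron a b c.
Proof.
move=> [[a0 ab] [[b0 bb] [c0 cb]]]; rewrite /heron.
apply: mulr_gt0; [apply: mulr_gt0; [apply: mulr_gt0|]|]; lra.
Qed.

Definition cosarg (t x s : R) := (t ^+ 2 + s ^+ 2 - x ^+ 2) / (2 * t * s).

Lemma cosarg_bound (t x s : R) : inV t x s -> -1 < cosarg t x s < 1.
Proof.
move=> [[a0 ab] [[b0 bb] [c0 cb]]]; rewrite /cosarg.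
have h : 0 < 2 * t * s by apply: mulr_gt0; [apply: mulr_gt0|]; lra.
rewrite ltr_pdivlMr // ltr_pdivrMr //; apply/andP; split; nra.
Qed.

Lemma cosarg_id (t x s : R) : 0 < t -> 0 < s ->
  4 * t ^+ 2 * s ^+ 2 * (1 - cosarg t x s ^+ 2) = heron t x s.
Proof.
move=> t0 s0; rewrite /cosarg /heron.
field; apply/andP; split; apply: lt0r_neq0 => //.
Qed.

Lemma sqrt_cosarg (t x s : R) : inV t x s ->
  t * s * Num.sqrt (1 - cosarg t x s ^+ 2) = Num.sqrt (heron t x s) / 2.
Proof.
move=> h; have hp := heron_pos h.
move: h => [[t0 _] [_ [s0 _]]].
have e : 1 - cosarg t x s ^+ 2 = (Num.sqrt (heron t x s) / (2 * t * s)) ^+ 2.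
  rewrite [RHS]expr_div_n (sqr_sqrtr (ltW hp)) -(cosarg_id x t0 s0).
  field; apply/andP; split; apply: lt0r_neq0 => //.
rewrite e sqrtr_sqr ger0_norm; last first.
  apply: divr_ge0; [exact: sqrtr_ge0| apply: mulr_ge0; [apply: mulr_ge0|]; lra].
field; apply/andP; split; apply: lt0r_neq0 => //.
Qed.

Definition pa m (w : 'rV[R]_m) k := tt w k * cos (theta w k).
Definition pb m (w : 'rV[R]_m) k := tt w k * sin (theta w k).

Lemma thetaS m (w : 'rV[R]_m) k :
  theta w k.+1 = theta w k + alpha (tt w k) (xx w k) (tt w k.+1).
Proof. by rewrite /theta big_ord_recr. Qed.

Lemma pab_norm m (w : 'rV[R]_m) k : pa w k ^+ 2 + pb w k ^+ 2 = tt w k ^+ 2.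
Proof.
rewrite /pa /pb !exprMn -mulrDr cos2Dsin2; ring.
Qed.

Lemma pab_dot m (w : 'rV[R]_m) k : inV (tt w k) (xx w k) (tt w k.+1) ->
  pa w k * pa w k.+1 + pb w k * pb w k.+1 =
  (tt w k ^+ 2 + tt w k.+1 ^+ 2 - xx w k ^+ 2) / 2.
Proof.
move=> h; have hb := cosarg_bound h.
move: h => [[t0 _] [_ [s0 _]]].
rewrite /pa /pb thetaS cosD sinD.
have -> : cos (alpha (tt w k) (xx w k) (tt w k.+1)) = cosarg (tt w k) (xx w k) (tt w k.+1).
  rewrite /alpha -/(cosarg _ _ _) acosK // in_itv /=; case/andP: hb => h1 h2; apply/andP; split; lra.
set c := cos _; set s := sin _; set u := cosarg _ _ _.
have e : (c ^+ 2 + s ^+ 2) = 1 by exact: cos2Dsin2.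
have -> : tt w k * c * (tt w k.+1 * (c * u - s * sin (alpha (tt w k) (xx w k) (tt w k.+1))))
  + tt w k * s * (tt w k.+1 * (s * u + c * sin (alpha (tt w k) (xx w k) (tt w k.+1))))
  = tt w k * tt w k.+1 * u * (c ^+ 2 + s ^+ 2) by ring.
rewrite e mulr1 /u /cosarg; field; apply/andP; split; apply: lt0r_neq0 => //.
Qed.

Lemma pab_cross m (w : 'rV[R]_m) k : inV (tt w k) (xx w k) (tt w k.+1) ->
  pa w k * pb w k.+1 - pb w k * pa w k.+1 =
  Num.sqrt (heron (tt w k) (xx w k) (tt w k.+1)) / 2.
Proof.
move=> h; have hb := cosarg_bound h; have hs := sqrt_cosarg h.
rewrite /pa /pb thetaS cosD sinD.
have -> : sin (alpha (tt w k) (xx w k) (tt w k.+1)) =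
   Num.sqrt (1 - cosarg (tt w k) (xx w k) (tt w k.+1) ^+ 2).
  rewrite /alpha -/(cosarg _ _ _) sin_acos // ; case/andP: hb => h1 h2; apply/andP; split; lra.
rewrite -hs.
set c := cos _; set s := sin _.
have e : (c ^+ 2 + s ^+ 2) = 1 by exact: cos2Dsin2.
set q := Num.sqrt _.
transitivity (tt w k * tt w k.+1 * q * (c ^+ 2 + s ^+ 2)); first by ring.
by rewrite e mulr1.
Qed.

End Trig.


Section Geo.
Variable R : realFieldType.

Definition crs (a1 b1 a2 b2 : R) : R := a1 * b2 - b1 * a2.
Definition ccx (a1 b1 a2 b2 : R) : R :=
  ((a1^+2+b1^+2) * b2 - (a2^+2+b2^+2) * b1) / (2 * crs a1 b1 a2 b2).
Definition ccy (a1 b1 a2 b2 : R) : R :=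
  (a1 * (a2^+2+b2^+2) - a2 * (a1^+2+b1^+2)) / (2 * crs a1 b1 a2 b2).

Lemma cc_uniq (a1 b1 a2 b2 cx cy : R) : crs a1 b1 a2 b2 != 0 ->
  2 * (a1 * cx + b1 * cy) = a1^+2 + b1^+2 ->
  2 * (a2 * cx + b2 * cy) = a2^+2 + b2^+2 ->
  cx = ccx a1 b1 a2 b2 /\ cy = ccy a1 b1 a2 b2.
Proof.
move=> hd e1 e2; rewrite /ccx /ccy.
have h2 : 2 * crs a1 b1 a2 b2 != 0 by rewrite mulf_neq0 // pnatr_eq0.
move: h2; rewrite /crs => h2.
split.
  have h : 2 * (a1 * b2 - b1 * a2) * cx = (a1 ^+ 2 + b1 ^+ 2) * b2 - (a2 ^+ 2 + b2 ^+ 2) * b1.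
    by rewrite -e1 -e2; ring.
  by rewrite -h; field.
have h : 2 * (a1 * b2 - b1 * a2) * cy = a1 * (a2 ^+ 2 + b2 ^+ 2) - a2 * (a1 ^+ 2 + b1 ^+ 2).
  by rewrite -e1 -e2; ring.
by rewrite -h; field.
Qed.

Lemma cc_eq (a1 b1 a2 b2 : R) : crs a1 b1 a2 b2 != 0 ->
  2 * (a1 * ccx a1 b1 a2 b2 + b1 * ccy a1 b1 a2 b2) = a1^+2 + b1^+2 /\
  2 * (a2 * ccx a1 b1 a2 b2 + b2 * ccy a1 b1 a2 b2) = a2^+2 + b2^+2.
Proof.
move=> hd; rewrite /ccx /ccy; move: hd; rewrite /crs => hd.
by split; field.
Qed.

Lemma E_identity (a1 b1 a2 b2 a3 b3 cx cy : R) :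
  crs a1 b1 a2 b2 != 0 -> crs a2 b2 a3 b3 != 0 ->
  2 * (a1 * cx + b1 * cy) = a1^+2 + b1^+2 ->
  2 * (a2 * cx + b2 * cy) = a2^+2 + b2^+2 ->
  ((a1 * (a1 - a2) + b1 * (b1 - b2)) / crs a1 b1 a2 b2 +
   (a3 * (a3 - a2) + b3 * (b3 - b2)) / crs a2 b2 a3 b3) * crs a2 b2 a3 b3
  = a3^+2 + b3^+2 - 2 * (a3 * cx + b3 * cy).
Proof.
move=> h1 h2 e1 e2; have [-> ->] := cc_uniq h1 e1 e2.
move: h1 h2; rewrite /ccx /ccy /crs => h1 h2.
field; by rewrite h1 h2.
Qed.

Lemma side_x (a1 b1 a2 b2 cx cy : R) (x : R) :
  crs a1 b1 a2 b2 != 0 ->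
  2 * (a1 * cx + b1 * cy) = a1^+2 + b1^+2 ->
  2 * (a2 * cx + b2 * cy) = a2^+2 + b2^+2 ->
  x ^+ 2 = (a1 - a2)^+2 + (b1 - b2)^+2 ->
  x ^+ 2 = 4 * (cx^+2 + cy^+2 - (x * (a1 * a2 + b1 * b2) / (2 * crs a1 b1 a2 b2))^+2).
Proof.
move=> h1 e1 e2 ex; have [-> ->] := cc_uniq h1 e1 e2.
move: h1; rewrite /ccx /ccy /crs => h1.
rewrite !expr_div_n !exprMn ex; field; by rewrite h1.
Qed.

Lemma side_l (a1 b1 a2 b2 cx cy : R) (t : R) :
  crs a1 b1 a2 b2 != 0 ->
  2 * (a1 * cx + b1 * cy) = a1^+2 + b1^+2 ->
  2 * (a2 * cx + b2 * cy) = a2^+2 + b2^+2 ->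
  t ^+ 2 = a1^+2 + b1^+2 ->
  t ^+ 2 = 4 * (cx^+2 + cy^+2 -
     (t * (a2 * (a2 - a1) + b2 * (b2 - b1)) / (2 * crs a1 b1 a2 b2))^+2).
Proof.
move=> h1 e1 e2 ex; have [-> ->] := cc_uniq h1 e1 e2.
move: h1; rewrite /ccx /ccy /crs => h1.
rewrite !expr_div_n !exprMn ex; field; by rewrite h1.
Qed.

Lemma side_r (a1 b1 a2 b2 cx cy : R) (t : R) :
  crs a1 b1 a2 b2 != 0 ->
  2 * (a1 * cx + b1 * cy) = a1^+2 + b1^+2 ->
  2 * (a2 * cx + b2 * cy) = a2^+2 + b2^+2 ->
  t ^+ 2 = a2^+2 + b2^+2 ->
  t ^+ 2 = 4 * (cx^+2 + cy^+2 -
     (t * (a1 * (a1 - a2) + b1 * (b1 - b2)) / (2 * crs a1 b1 a2 b2))^+2).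
Proof.
move=> h1 e1 e2 ex; have [-> ->] := cc_uniq h1 e1 e2.
move: h1; rewrite /ccx /ccy /crs => h1.
rewrite !expr_div_n !exprMn ex; field; by rewrite h1.
Qed.


Lemma rot_def (v1 v2 w1 w2 : R) :
  v1^+2 + v2^+2 != 0 -> v1^+2 + v2^+2 = w1^+2 + w2^+2 ->
  let p := (v1 * w1 + v2 * w2) / (v1^+2 + v2^+2) in
  let q := (v1 * w2 - v2 * w1) / (v1^+2 + v2^+2) in
  p^+2 + q^+2 = 1 /\ w1 = p * v1 - q * v2 /\ w2 = q * v1 + p * v2.
Proof.
move=> h e p q; rewrite /p /q; split; last by split; field.
rewrite !expr_div_n -mulrDl.
have -> : (v1 * w1 + v2 * w2) ^+ 2 + (v1 * w2 - v2 * w1) ^+ 2 =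
  (v1^+2 + v2^+2) * (w1^+2 + w2^+2) by ring.
by rewrite -e -expr2 divff // expf_neq0.
Qed.

Lemma rot_two (p q v1 v2 w1 w2 : R) :
  p^+2 + q^+2 = 1 -> v1^+2 + v2^+2 != 0 -> v1^+2 + v2^+2 = w1^+2 + w2^+2 ->
  (w1 - v1)^+2 + (w2 - v2)^+2 = (p * v1 - q * v2 - v1)^+2 + (q * v1 + p * v2 - v2)^+2 ->
  (w1 = p * v1 - q * v2 /\ w2 = q * v1 + p * v2) \/
  (w1 = p * v1 + q * v2 /\ w2 = - q * v1 + p * v2).
Proof.
move=> pq h e d.
have [pq' [e1 e2]] := rot_def h e.
set a := (v1 * w1 + v2 * w2) / (v1^+2 + v2^+2) in pq' e1 e2.
set b := (v1 * w2 - v2 * w1) / (v1^+2 + v2^+2) in pq' e1 e2.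
have ha : a = p.
  have : (v1^+2 + v2^+2) * a = (v1^+2 + v2^+2) * p.
    rewrite /a mulrC divfK //.
    have : (v1 * w1 + v2 * w2) * 2 = (v1^+2 + v2^+2) * p * 2.
      have -> : (v1 * w1 + v2 * w2) * 2 = v1^+2 + v2^+2 + (w1^+2 + w2^+2) - ((w1 - v1)^+2 + (w2 - v2)^+2) by ring.
      rewrite d -e.
      have -> : (p * v1 - q * v2 - v1) ^+ 2 + (q * v1 + p * v2 - v2) ^+ 2 =
        (v1^+2 + v2^+2) * (p^+2 + q^+2) - 2 * p * (v1^+2 + v2^+2) + (v1^+2 + v2^+2) by ring.
      rewrite pq; ring.
    have two0 : (2:R) != 0 by rewrite pnatr_eq0.
    by move/(mulIf two0).
  by move/(mulfI h).
have hb : b ^+ 2 = q ^+ 2 by rewrite -ha in pq; lra.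
move: hb => /eqP; rewrite -subr_eq0 subr_sqr mulf_eq0 => /orP[] /eqP hb.
  have hb' : b = q by lra.
  by left; rewrite e1 e2 ha hb'.
have hb' : b = - q by lra.
by right; rewrite e1 e2 ha hb'; split; ring.
Qed.

Lemma inscribed (p q c1 c2 u1 u2 : R) :
  p^+2 + q^+2 = 1 -> c1^+2 + c2^+2 = u1^+2 + u2^+2 ->
  (1 - p) * ((c1 + u1) * (c1 + (p * u1 - q * u2)) + (c2 + u2) * (c2 + (q * u1 + p * u2)))
  = q * ((c1 + u1) * (c2 + (q * u1 + p * u2)) - (c2 + u2) * (c1 + (p * u1 - q * u2))).
Proof.
move=> pq e; apply/eqP; rewrite -subr_eq0; apply/eqP.
transitivity ((1 - p) * (c1^+2 + c2^+2 - (u1^+2 + u2^+2)) +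
  (c1 * u1 + c2 * u2 + (u1^+2 + u2^+2)) * (1 - (p^+2 + q^+2))); first by ring.
by rewrite pq e; ring.
Qed.

End Geo.


Section DDefs.
Variable R : realType.
Variable m : nat.
Variable w : 'rV[R]_m.

Definition Sq k := Num.sqrt (heron (tt w k) (xx w k) (tt w k.+1)).
Definition Dx k := xx w k * (tt w k ^+ 2 + tt w k.+1 ^+ 2 - xx w k ^+ 2) / (2 * Sq k).
Definition Dl k := tt w k * (xx w k ^+ 2 + tt w k.+1 ^+ 2 - tt w k ^+ 2) / (2 * Sq k).
Definition Dr k := tt w k.+1 * (tt w k ^+ 2 + xx w k ^+ 2 - tt w k.+1 ^+ 2) / (2 * Sq k).

Definition Cond (N : nat) : Prop :=
  (forall k, (k < N)%N -> Dx k = Dl 0) /\ Dr N.-1 = Dl 0 /\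
  (forall k, (0 < k < N)%N -> Dr k.-1 + Dl k = 0).

End DDefs.

Section Geom.
Variable R : realType.
Variable n : nat.
Hypothesis hn : (3 <= n)%N.
Variable w : 'rV[R]_(2 * n - 3).
Hypothesis hw : Omega w.

Local Notation N := (n - 2)%N.
Local Notation t := (tt w).
Local Notation x := (xx w).
Local Notation a := (pa w).
Local Notation b := (pb w).

Lemma O_inV k : (k < N)%N -> inV (t k) (x k) (t k.+1).
Proof. by move=> hk; case: hw => _ [h _]; apply: h. Qed.

Lemma N_gt0 : (0 < N)%N.
Proof. by rewrite subn_gt0; apply: leq_trans hn. Qed.

Lemma O_t k : (k <= N)%N -> 0 < t k.
Proof.
move=> hk; case: (ltnP k N) => hk'.
  by case: (O_inV hk') => [[]].
have ek : k = N by apply/eqP; rewrite eqn_leq hk hk'.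
have hN : (N.-1 < N)%N by rewrite ltn_predL N_gt0.
have := O_inV hN; rewrite prednK ?N_gt0 // -ek.
by case=> _ [_ []].
Qed.

Lemma O_x k : (k < N)%N -> 0 < x k.
Proof. by move=> hk; case: (O_inV hk) => _ [[]]. Qed.

Definition cr k := crs (a k) (b k) (a k.+1) (b k.+1).

Lemma Sq_pos k : (k < N)%N -> 0 < Sq w k.
Proof. by move=> hk; rewrite sqrtr_gt0; apply: heron_pos; apply: O_inV. Qed.

Lemma cr_eq k : (k < N)%N -> cr k = Sq w k / 2.
Proof. by move=> hk; rewrite /cr /crs pab_cross //; apply: O_inV. Qed.

Lemma cr_pos k : (k < N)%N -> 0 < cr k.
Proof. by move=> hk; rewrite cr_eq // divr_gt0 // Sq_pos. Qed.

Lemma vec_facts k : (k < N)%N ->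
  [/\ t k ^+ 2 = a k ^+ 2 + b k ^+ 2, t k.+1 ^+ 2 = a k.+1 ^+ 2 + b k.+1 ^+ 2,
      x k ^+ 2 = (a k - a k.+1) ^+ 2 + (b k - b k.+1) ^+ 2 &
      Sq w k = 2 * cr k].
Proof.
move=> hk; have hd := pab_dot (O_inV hk).
have h1 := pab_norm w k; have h2 := pab_norm w k.+1.
split; [by rewrite h1 | by rewrite h2 | | by rewrite cr_eq //; field].
have -> : (a k - a k.+1) ^+ 2 + (b k - b k.+1) ^+ 2 =
  (a k ^+2 + b k ^+ 2) + (a k.+1 ^+ 2 + b k.+1 ^+ 2) - 2 * (a k * a k.+1 + b k * b k.+1) by ring.
rewrite hd h1 h2; lra.
Qed.

Lemma Dx_vec k : (k < N)%N ->
  Dx w k = x k * (a k * a k.+1 + b k * b k.+1) / (2 * cr k).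
Proof.
move=> hk; have [h1 h2 h3 h4] := vec_facts hk; have hc := cr_pos hk.
rewrite /Dx h1 h2 h3 h4; have hc0 : cr k != 0 by apply: lt0r_neq0.
by field.
Qed.

Lemma Dl_vec k : (k < N)%N ->
  Dl w k = t k * (a k.+1 * (a k.+1 - a k) + b k.+1 * (b k.+1 - b k)) / (2 * cr k).
Proof.
move=> hk; have [h1 h2 h3 h4] := vec_facts hk; have hc := cr_pos hk.
rewrite /Dl h1 h2 h3 h4; have hc0 : cr k != 0 by apply: lt0r_neq0.
by field.
Qed.

Lemma Dr_vec k : (k < N)%N ->
  Dr w k = t k.+1 * (a k * (a k - a k.+1) + b k * (b k - b k.+1)) / (2 * cr k).
Proof.
move=> hk; have [h1 h2 h3 h4] := vec_facts hk; have hc := cr_pos hk.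
rewrite /Dr h1 h2 h3 h4; have hc0 : cr k != 0 by apply: lt0r_neq0.
by field.
Qed.

Lemma vertex_lt (k : 'I_n) : (k < n - 1)%N -> vertex w k = (a k, b k).
Proof. by move=> hk; rewrite /vertex hk. Qed.

Lemma vertex_last (k : 'I_n) : ~~ (k < n - 1)%N -> vertex w k = (0, 0).
Proof. by move=> hk; rewrite /vertex (negbTE hk). Qed.


Lemma sq_inj (u v : R) : 0 < u -> 0 < v -> u ^+ 2 = v ^+ 2 -> u = v.
Proof. by move=> hu hv e; nra. Qed.

Lemma cr_neq0 k : (k < N)%N -> cr k != 0.
Proof. by move=> hk; apply: lt0r_neq0; apply: cr_pos. Qed.

Lemma predN_lt : (N.-1 < N)%N.
Proof. by rewrite ltn_predL N_gt0. Qed.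

Lemma predN_S : (N.-1).+1 = N.
Proof. by rewrite prednK // N_gt0. Qed.

Section CondReg.
Hypothesis hC : Cond w N.
Let c1 := ccx (a 0) (b 0) (a 1) (b 1).
Let c2 := ccy (a 0) (b 0) (a 1) (b 1).
Let circ k := 2 * (a k * c1 + b k * c2) = a k ^+ 2 + b k ^+ 2.

Lemma circ_pair k : (k < N)%N -> circ k /\ circ k.+1.
Proof.
elim: k => [|k IH] hk.
  by have := cc_eq (cr_neq0 hk).
have hk' : (k < N)%N by apply: ltn_trans hk.
have [h1 h2] := IH hk'; split => //.
have hE := E_identity (cr_neq0 hk') (cr_neq0 hk) h1 h2.
have e0 : Dr w k + Dl w k.+1 = 0 by case: hC => _ [_ h]; apply: (h k.+1); rewrite hk.
move: e0; rewrite Dr_vec // Dl_vec //.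
set E := (_ / crs _ _ _ _ + _ / crs _ _ _ _) in hE.
have -> : t k.+1 * (a k * (a k - a k.+1) + b k * (b k - b k.+1)) / (2 * cr k) +
   t k.+1 * (a k.+2 * (a k.+2 - a k.+1) + b k.+2 * (b k.+2 - b k.+1)) / (2 * cr k.+1)
   = t k.+1 / 2 * E.
  by rewrite /E /cr; field; rewrite -!/(cr _) !cr_neq0.
move/eqP; rewrite mulf_eq0 => /orP[|/eqP E0].
  by rewrite mulf_eq0 invr_eq0 pnatr_eq0 orbF => /eqP; have := O_t (ltnW hk); lra.
rewrite /circ; move: hE; rewrite E0 mul0r => hE; lra.
Qed.

Lemma circ_all k : (k <= N)%N -> circ k.
Proof.
move=> hk; case: (ltnP k N) => hk'; first by case: (circ_pair hk').
have ek : k = N by apply/eqP; rewrite eqn_leq hk hk'.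
by rewrite ek -predN_S; case: (circ_pair predN_lt).
Qed.

Lemma Cond_equi : equilateral w.
Proof.
have [c0 c1'] := circ_pair N_gt0.
have [h0 _ _ _] := vec_facts N_gt0.
have ht0 := side_l (cr_neq0 N_gt0) c0 c1' h0.
rewrite -/(cr 0) -Dl_vec ?N_gt0 // in ht0.
split.
  move=> k hk; have [ck ck'] := circ_pair hk.
  have [_ _ hx _] := vec_facts hk.
  have hxk := side_x (cr_neq0 hk) ck ck' hx.
  rewrite -/(cr k) -Dx_vec // in hxk.
  case: hC => h1 _; rewrite h1 // in hxk.
  apply: sq_inj; [exact: O_x | exact: O_t | by rewrite hxk ht0].
have [ck ck'] := circ_pair predN_lt.
have [_ hN _ _] := vec_facts predN_lt.
have htN := side_r (cr_neq0 predN_lt) ck ck' hN.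
rewrite -/(cr _) -Dr_vec ?predN_lt // in htN.
case: hC => _ [h2 _]; rewrite h2 predN_S in htN.
apply: sq_inj; [exact: O_t | exact: O_t | by rewrite htN ht0].
Qed.

Lemma Cond_insc : inscribable w.
Proof.
exists (c1, c2), (Num.sqrt (c1 ^+ 2 + c2 ^+ 2)) => k.
rewrite sqr_sqrtr; last by apply: addr_ge0; apply: sqr_ge0.
case: (ltnP k (n - 1)) => hk.
  rewrite vertex_lt //=.
  have hk' : (k <= N)%N by move: hk hn; lia.
  have := circ_all hk'; rewrite /circ => e; lra.
rewrite vertex_last /=; [ring | by rewrite -leqNgt].
Qed.

End CondReg.

Section RegCond.
Hypothesis he : equilateral w.
Variables (c1 c2 r : R).
Hypothesis hc : forall k : 'I_n,
    ((vertex w k).1 - c1) ^+ 2 + ((vertex w k).2 - c2) ^+ 2 = r ^+ 2.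

Let s := t 0.
Lemma R_x k : (k < N)%N -> x k = s.
Proof. by case: he => h _; apply: h. Qed.
Lemma R_tN : t N = s.
Proof. by case: he. Qed.

Lemma R_circ k : (k <= N)%N -> (a k - c1) ^+ 2 + (b k - c2) ^+ 2 = c1 ^+ 2 + c2 ^+ 2.
Proof.
move=> hk.
have hk1 : (k < n)%N by move: hk hn; lia.
have hl : (n.-1 < n)%N by move: hn; lia.
have := hc (Ordinal hl); rewrite vertex_last /=; last by rewrite -leqNgt; move: hn; lia.
have := hc (Ordinal hk1); rewrite vertex_lt /=; last by move: hk hn; lia.
move=> -> <-; ring.
Qed.

Lemma R_circ2 k : (k <= N)%N -> 2 * (a k * c1 + b k * c2) = a k ^+ 2 + b k ^+ 2.
Proof. by move=> hk; have := R_circ hk; lra. Qed.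

Let rho2 := c1 ^+ 2 + c2 ^+ 2.

Lemma t_sq k : t k ^+ 2 = a k ^+ 2 + b k ^+ 2.
Proof. by rewrite pab_norm. Qed.

Lemma P_neq0 k : (k <= N)%N -> a k ^+ 2 + b k ^+ 2 != 0.
Proof. by move=> hk; rewrite -t_sq // expf_neq0 // lt0r_neq0 // O_t. Qed.

Lemma rho2_neq0 : rho2 != 0.
Proof.
apply/eqP => h0.
have h1 : c1 = 0 by move: h0; rewrite /rho2; nra.
have h2 : c2 = 0 by move: h0; rewrite /rho2; nra.
have := R_circ (leq0n N); rewrite h1 h2 !subr0 => e.
by have := P_neq0 (leq0n N); rewrite e expr0n /= addr0 eqxx.
Qed.

Definition U1 j := if j is j'.+1 then a j' - c1 else - c1.
Definition U2 j := if j is j'.+1 then b j' - c2 else - c2.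

Lemma U_norm j : (j <= N.+1)%N -> U1 j ^+ 2 + U2 j ^+ 2 = rho2.
Proof. by case: j => [|j] hj /=; [rewrite /rho2; ring | rewrite R_circ]. Qed.

Let p := (U1 0 * U1 1 + U2 0 * U2 1) / (U1 0 ^+ 2 + U2 0 ^+ 2).
Let q := (U1 0 * U2 1 - U2 0 * U1 1) / (U1 0 ^+ 2 + U2 0 ^+ 2).

Lemma pq_facts : p ^+ 2 + q ^+ 2 = 1 /\ U1 1 = p * U1 0 - q * U2 0 /\ U2 1 = q * U1 0 + p * U2 0.
Proof.
apply: rot_def; first by rewrite U_norm // rho2_neq0.
by rewrite !U_norm.
Qed.

Lemma dist_s j : (j <= N)%N -> (U1 j.+1 - U1 j) ^+ 2 + (U2 j.+1 - U2 j) ^+ 2 = s ^+ 2.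
Proof.
case: j => [|j] hj /=.
  by rewrite /s t_sq //; ring.
rewrite -(R_x (k := j)) //.
have [_ _ hx _] := vec_facts (hj : (j < N)%N).
by rewrite hx; ring.
Qed.

Lemma rot_dist v1 v2 : v1 ^+ 2 + v2 ^+ 2 = rho2 ->
  (p * v1 - q * v2 - v1) ^+ 2 + (q * v1 + p * v2 - v2) ^+ 2 = s ^+ 2.
Proof.
move=> hv; have [pq [e1 e2]] := pq_facts.
have := dist_s (leq0n N); rewrite e1 e2.
have h0 := U_norm (leq0n N.+1).
move=> <-.
transitivity (rho2 * (p ^+ 2 + q ^+ 2 - 2 * p + 1)); first by rewrite -hv; ring.
by rewrite -h0; ring.
Qed.

Lemma p_neq1 : 1 - p != 0.
Proof.
apply/eqP => hp.
have [pq [e1 e2]] := pq_facts.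
have hp' : p = 1 by lra.
have hq : q = 0 by move: pq; rewrite hp'; nra.
move: e1 e2; rewrite hp' hq /= !mul1r !mul0r subr0 add0r => e1 e2.
have ha : a 0 = 0 by lra.
have hb : b 0 = 0 by lra.
by have := P_neq0 (leq0n N); rewrite ha hb expr0n /= addr0 eqxx.
Qed.

Lemma rot_chain j : (j <= N)%N ->
  U1 j.+1 = p * U1 j - q * U2 j /\ U2 j.+1 = q * U1 j + p * U2 j.
Proof.
have [pq _] := pq_facts.
elim: j => [|j IH] hj; first by case: pq_facts => _.
have [ih1 ih2] := IH (ltnW hj).
have := @rot_two _ p q (U1 j.+1) (U2 j.+1) (U1 j.+2) (U2 j.+2) pq.
rewrite U_norm //; last by apply: leq_trans hj _.
rewrite rho2_neq0 U_norm // => /(_ isT erefl).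
rewrite dist_s // rot_dist ?U_norm //; last by apply: leq_trans hj _.
case/(_ erefl) => // -[f1 f2].
exfalso.
have g1 : U1 j.+2 = U1 j.
  rewrite f1 ih1 ih2; transitivity ((p ^+ 2 + q ^+ 2) * U1 j); [ring | by rewrite pq mul1r].
have g2 : U2 j.+2 = U2 j.
  rewrite f2 ih1 ih2; transitivity ((p ^+ 2 + q ^+ 2) * U2 j); [ring | by rewrite pq mul1r].
case: j hj ih1 ih2 IH f1 f2 g1 g2 => [|j] hj ih1 ih2 IH f1 f2 g1 g2.
  move: g1 g2 => /= g1 g2.
  have ha : a 1 = 0 by lra.
  have hb : b 1 = 0 by lra.
  by have := P_neq0 hj; rewrite ha hb expr0n /= addr0 eqxx.
move: g1 g2 => /= g1 g2.
have ha : a j.+2 = a j by lra.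
have hb : b j.+2 = b j by lra.
have c0 := cr_pos (ltnW hj : (j < N)%N).
have c1' := cr_pos (hj : (j.+1 < N)%N).
by move: c0 c1'; rewrite /cr /crs ha hb; lra.
Qed.

Lemma rot_close : U1 0 = p * U1 N.+1 - q * U2 N.+1 /\ U2 0 = q * U1 N.+1 + p * U2 N.+1.
Proof.
have [pq _] := pq_facts.
have := @rot_two _ p q (U1 N.+1) (U2 N.+1) (U1 0) (U2 0) pq.
rewrite U_norm // rho2_neq0 U_norm // => /(_ isT erefl).
rewrite rot_dist ?U_norm //.
have -> : (U1 0 - U1 N.+1) ^+ 2 + (U2 0 - U2 N.+1) ^+ 2 = s ^+ 2.
  by rewrite /= -R_tN t_sq //; ring.
case/(_ erefl) => // -[f1 f2]; exfalso.
have [ih1 ih2] := rot_chain (leqnn N).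
have g1 : U1 0 = U1 N.
  rewrite f1 ih1 ih2; transitivity ((p ^+ 2 + q ^+ 2) * U1 N); [ring | by rewrite pq mul1r].
have g2 : U2 0 = U2 N.
  rewrite f2 ih1 ih2; transitivity ((p ^+ 2 + q ^+ 2) * U2 N); [ring | by rewrite pq mul1r].
move: g1 g2; rewrite -predN_S /= => g1 g2.
have ha : a N.-1 = 0 by lra.
have hb : b N.-1 = 0 by lra.
by have := P_neq0 (ltnW predN_lt); rewrite ha hb expr0n /= addr0 eqxx.
Qed.

Lemma inscribed' (c1' c2' u1 u2 A1 A2 B1 B2 : R) :
  c1' ^+ 2 + c2' ^+ 2 = u1 ^+ 2 + u2 ^+ 2 ->
  A1 = c1' + u1 -> A2 = c2' + u2 ->
  B1 = c1' + (p * u1 - q * u2) -> B2 = c2' + (q * u1 + p * u2) ->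
  (1 - p) * (A1 * B1 + A2 * B2) = q * (A1 * B2 - A2 * B1).
Proof.
move=> h -> -> -> ->; apply: inscribed => //.
by case: pq_facts.
Qed.

Let K := s * q / (2 * (1 - p)).

Lemma Dform (dt cr' : R) : cr' != 0 -> (1 - p) * dt = q * cr' ->
  s * dt / (2 * cr') = K.
Proof.
move=> h e; rewrite /K.
have -> : dt = q * cr' / (1 - p) by rewrite -e; field; exact: p_neq1.
by field; rewrite h p_neq1.
Qed.

Lemma R_Dx k : (k < N)%N -> Dx w k = K.
Proof.
move=> hk; rewrite Dx_vec // R_x //; apply: Dform; first exact: cr_neq0.
have [f1 f2] := rot_chain (hk : (k.+1 <= N)%N).
apply: (@inscribed' c1 c2 (U1 k.+1) (U2 k.+1)).
- by rewrite U_norm //; apply: ltnW.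
- by rewrite /=; ring.
- by rewrite /=; ring.
- by rewrite -f1 /=; ring.
- by rewrite -f2 /=; ring.
Qed.

Lemma R_Dl0 : Dl w 0 = K.
Proof.
rewrite Dl_vec ?N_gt0 //; apply: Dform; first exact: cr_neq0 N_gt0.
have [f1 f2] := pq_facts.2.
have e := @inscribed' (c1 - a 1) (c2 - b 1) (U1 0) (U2 0) (- a 1) (- b 1) (a 0 - a 1) (b 0 - b 1).
have {}e : (1 - p) * (- a 1 * (a 0 - a 1) + - b 1 * (b 0 - b 1)) =
     q * (- a 1 * (b 0 - b 1) - - b 1 * (a 0 - a 1)).
  apply: e.
  - by rewrite U_norm // /rho2 -(R_circ N_gt0); ring.
  - by rewrite /=; ring.
  - by rewrite /=; ring.
  - by rewrite -f1 /=; ring.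
  - by rewrite -f2 /=; ring.
rewrite /cr /crs.
transitivity ((1 - p) * (- a 1 * (a 0 - a 1) + - b 1 * (b 0 - b 1))); first by ring.
by rewrite e; ring.
Qed.

Lemma R_DrN : Dr w N.-1 = K.
Proof.
rewrite Dr_vec ?predN_lt // predN_S R_tN; apply: Dform; first exact: cr_neq0 predN_lt.
have [f1 f2] := rot_close.
have e := @inscribed' (c1 - a N.-1) (c2 - b N.-1) (U1 N.+1) (U2 N.+1)
   (a N - a N.-1) (b N - b N.-1) (- a N.-1) (- b N.-1).
have {}e : (1 - p) * ((a N - a N.-1) * - a N.-1 + (b N - b N.-1) * - b N.-1) =
     q * ((a N - a N.-1) * - b N.-1 - (b N - b N.-1) * - a N.-1).
  apply: e.
  - by rewrite U_norm // /rho2 -(R_circ (ltnW predN_lt)); ring.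
  - by rewrite /=; ring.
  - by rewrite /=; ring.
  - by rewrite -f1 /=; ring.
  - by rewrite -f2 /=; ring.
rewrite /cr /crs predN_S.
transitivity ((1 - p) * ((a N - a N.-1) * - a N.-1 + (b N - b N.-1) * - b N.-1)); first by ring.
by rewrite e; ring.
Qed.

Lemma R_C3 k : (0 < k < N)%N -> Dr w k.-1 + Dl w k = 0.
Proof.
case: k => [//|k] /= hk.
have hk' : (k < N)%N by apply: ltn_trans hk.
have h1 := R_circ2 (ltnW hk').
have h2 := R_circ2 (ltnW hk).
have h3 := R_circ2 (hk : (k.+2 <= N)%N).
have hE := E_identity (cr_neq0 hk') (cr_neq0 hk) h1 h2.
rewrite h3 subrr in hE.
move/eqP: hE; rewrite mulf_eq0 (negbTE (cr_neq0 hk)) orbF => /eqP hE.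
rewrite Dr_vec // Dl_vec //.
set E := (_ / crs _ _ _ _ + _ / crs _ _ _ _) in hE.
transitivity (t k.+1 / 2 * E); last by rewrite hE mulr0.
by rewrite /E /cr; field; rewrite -!/(cr _) !cr_neq0.
Qed.

Lemma Reg_Cond : Cond w N.
Proof.
split; first by move=> k hk; rewrite R_Dx // R_Dl0.
split; first by rewrite R_DrN R_Dl0.
exact: R_C3.
Qed.

End RegCond.

Theorem Cond_iff : Cond w N <-> regular w.
Proof.
split; first by move=> h; split; [exact: Cond_equi | exact: Cond_insc].
by case=> he [[c1 c2] [r hc]]; apply: (@Reg_Cond he c1 c2 r).
Qed.

End Geom.


Section Diff.
Variable R : realType.
Variable V : normedModType R.

Lemma is_diff_heron (f g h df dg dh : V -> R) x :
 is_diff x f df -> is_diff x g dg -> is_diff x h dh ->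
 is_diff x (fun y => heron (f y) (g y) (h y))
   (fun v => 4 * f x * (g x ^+2 + h x ^+2 - f x ^+2) * df v
           + 4 * g x * (f x ^+2 + h x ^+2 - g x ^+2) * dg v
           + 4 * h x * (f x ^+2 + g x ^+2 - h x ^+2) * dh v).
Proof.
move=> Hf Hg Hh.
have -> : (fun y => heron (f y) (g y) (h y)) =
   (f + g + h) * (- f + g + h) * (f - g + h) * (f + g - h).
  by apply/funext => y; rewrite /heron.
eapply is_diff_eq; first by typeclasses eauto.
apply/funext => v /=. rewrite !fctE. rewrite -![_ *: _]/(_ * _). ring.
Qed.
End Diff.

Section Diff2.
Variable R : realType.
Variable V : normedModType R.

Lemma is_diff_sqrtR (y : R) : 0 < y ->
  is_diff y (@Num.sqrt R) (fun t => t *: (2 * Num.sqrt y)^-1).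
Proof.
move=> y0.
have hd : derivable (@Num.sqrt R) y 1 by apply: ex_derive; exact: is_derive1_sqrt.
apply: DiffDef; first exact/derivable1_diffP.
by rewrite deriv1E // derive1E derive_sqrt.
Qed.

Lemma is_diff_sqrt (h dh : V -> R) x : is_diff x h dh -> 0 < h x ->
  is_diff x (fun y => Num.sqrt (h y)) (fun v => dh v / (2 * Num.sqrt (h x))).
Proof.
move=> Hh hp.
have Hs := is_diff_sqrtR hp.
have -> : (fun y => Num.sqrt (h y)) = (@Num.sqrt R) \o h by [].
apply: is_diff_eq (is_diff_comp Hh Hs) _.
by apply/funext => v.
Qed.

Lemma is_diff_sum (K : nat) (F dF : nat -> V -> R) x :
  (forall k, (k < K)%N -> is_diff x (F k) (dF k)) ->
  is_diff x (fun y => \sum_(k < K) F k y) (fun v => \sum_(k < K) dF k v).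
Proof.
elim: K => [|K IH] H.
  have -> : (fun y : V => \sum_(k < 0) F k y) = cst 0.
    by apply/funext => y; rewrite big_ord0.
  eapply is_diff_eq; first by typeclasses eauto.
  by apply/funext => v; rewrite big_ord0.
have -> : (fun y => \sum_(k < K.+1) F k y) = (fun y => \sum_(k < K) F k y) + F K.
  by apply/funext => y; rewrite big_ord_recr.
have H1 := IH (fun k hk => H k (ltnW hk)).
have H2 := H K (ltnSn K).
eapply is_diff_eq; first by typeclasses eauto.
by apply/funext => v; rewrite big_ord_recr.
Qed.

Lemma is_diff_divc (h dh : V -> R) (c : R) x : is_diff x h dh ->
  is_diff x (fun y => h y / c) (fun v => dh v / c).
Proof.
move=> Hh.
have -> : (fun y => h y / c) = c^-1 *: h by apply/funext => y; rewrite /= mulrC.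
eapply is_diff_eq; first by typeclasses eauto.
by apply/funext => v; rewrite /= mulrC.
Qed.

End Diff2.

Section Coord.
Variable R : realType.
Variable m : nat.

Lemma coord_lin (j : nat) : linear (fun v : 'rV[R]_m => Defs.coord v j).
Proof.
move=> a u v; rewrite /Defs.coord; case: insubP => [i _ _|_].
  by rewrite !mxE.
by rewrite /= ?mulr0 ?scaler0 addr0.
Qed.

Lemma is_diff_coord (j : nat) (x : 'rV[R]_m) :
  is_diff x (fun v : 'rV[R]_m => Defs.coord v j) (fun v => Defs.coord v j).
Proof.
rewrite /Defs.coord; case: insubP => [i _ _|_].
  have @f : {linear 'rV[R]_m -> R}.
    by exists (fun N : 'rV[R]_m => N ord0 i); do 2![eexists]; do ?[constructor];
     rewrite ?mxE// => ? *; rewrite ?mxE//; move=> ?; rewrite !mxE.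
  rewrite (_ : (fun _ => _) = f) //.
  apply: DiffDef; first exact/linear_differentiable/coord_continuous.
  by rewrite diff_lin //; exact: coord_continuous.
eapply is_diff_eq; first exact: is_diff_cst.
by [].
Qed.
End Coord.

Section AreaDiff.
Variable R : realType.

Lemma is_diff_scl (m k : nat) (f df : 'rV[R]_m -> R) (e : 'rV[R]_k) x :
  is_diff x f df -> is_diff x (fun z => f z *: e) (fun v => df v *: e).
Proof.
move=> Hf; apply: DiffDef; first by apply: differentiableZl; exact: ex_diff.
by rewrite diffZl ?diff_val //; exact: ex_diff.
Qed.

Variable n : nat.
Local Notation m := (2 * n - 3)%N.

Lemma is_diff_perim (w : 'rV[R]_m) : is_diff w (@perim R n) (@perim R n).
Proof.
have H0 := is_diff_coord (2 * 0) w.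
have HN := is_diff_coord (2 * (n - 2)) w.
have HS := @is_diff_sum _ _ (n - 2) (fun k v => xx v k) (fun k v => xx v k) w
   (fun k _ => is_diff_coord _ w).
have -> : @perim R n = (fun v => tt v 0) + (fun v => \sum_(k < n - 2) xx v k) + (fun v => tt v (n - 2)).
  by apply/funext => v.
apply: is_diff_eq (is_diffD (is_diffD H0 HS) HN) _.
by apply/funext => v.
Qed.

Definition Garea (w v : 'rV[R]_m) : R :=
  \sum_(k < n - 2) (Dl w k * tt v k + Dx w k * xx v k + Dr w k * tt v k.+1).

Lemma is_diff_term (w : 'rV[R]_m) k : inV (tt w k) (xx w k) (tt w k.+1) ->
  is_diff w (fun v : 'rV[R]_m => Num.sqrt (heron (tt v k) (xx v k) (tt v k.+1)) / 4)
   (fun v => Dl w k * tt v k + Dx w k * xx v k + Dr w k * tt v k.+1).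
Proof.
move=> hi.
have Hh := is_diff_heron (is_diff_coord (2 * k) w) (is_diff_coord (2 * k).+1 w)
   (is_diff_coord (2 * k.+1) w).
have hp : 0 < heron (tt w k) (xx w k) (tt w k.+1) by apply: heron_pos.
have Hs := is_diff_sqrt Hh hp.
have Hd := is_diff_divc 4 Hs.
apply: is_diff_eq Hd _; apply/funext => v.
rewrite /Dl /Dx /Dr /Sq.
have hs : Num.sqrt (heron (tt w k) (xx w k) (tt w k.+1)) != 0 by rewrite lt0r_neq0 // sqrtr_gt0.
rewrite /tt /xx.
set S := Num.sqrt _.
set a := Defs.coord w _. set b := Defs.coord w _. set c := Defs.coord w _.
set a' := Defs.coord v _. set b' := Defs.coord v _. set c' := Defs.coord v _.
by field.
Qed.

Lemma is_diff_area (w : 'rV[R]_m) : Omega w -> is_diff w (@area R n) (Garea w).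
Proof.
move=> hw.
have -> : @area R n = fun v => \sum_(k < n - 2) (Num.sqrt (heron (tt v k) (xx v k) (tt v k.+1)) / 4).
  by apply/funext.
apply: (@is_diff_sum _ _ (n - 2) (fun k v => Num.sqrt (heron (tt v k) (xx v k) (tt v k.+1)) / 4)
   (fun k v => Dl w k * tt v k + Dx w k * xx v k + Dr w k * tt v k.+1)) => k hk.
by apply: is_diff_term; case: hw => _ [h _]; apply: h.
Qed.

Definition ee (i : 'I_2) : 'rV[R]_2 := \row_(j < 2) (i == j)%:R.

Lemma Psi_eq : @Psi R n = (fun z => perim z *: ee 0) + (fun z => area z *: ee 1).
Proof.
apply/funext => z; apply/matrixP => i j; rewrite /Psi /ee !mxE /=.
case: j => -[|[|//]] hj /=.
  by rewrite mulr1 mulr0 addr0.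
by rewrite mulr1 mulr0 add0r.
Qed.

Definition DPsi (w v : 'rV[R]_m) : 'rV[R]_2 := perim v *: ee 0 + Garea w v *: ee 1.

Lemma is_diff_Psi (w : 'rV[R]_m) : Omega w -> is_diff w (@Psi R n) (DPsi w).
Proof.
move=> hw; rewrite Psi_eq.
have H1 := is_diff_scl (ee 0) (is_diff_perim w).
have H2 := is_diff_scl (ee 1) (is_diff_area hw).
apply: is_diff_eq (is_diffD H1 H2) _.
by apply/funext => v.
Qed.

End AreaDiff.


Lemma det2 (R : comRingType) (M : 'M[R]_2) : \det M = M 0 0 * M 1 1 - M 0 1 * M 1 0.
Proof.
rewrite (expand_det_row M 0) big_ord_recl big_ord1 /cofactor !det_mx11 !mxE /=.
have e1 : lift 0 (0 : 'I_1) = 1 :> 'I_2 by apply/val_inj.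
have e2 : lift 1 (0 : 'I_1) = 0 :> 'I_2 by apply/val_inj.
rewrite e1 ?e2.
by rewrite expr0 expr1 mul1r mulN1r mulrN.
Qed.

Lemma rank_m2 (F : fieldType) m (J : 'M[F]_(m, 2)) (i0 : 'I_m) : J i0 0 = 1 ->
  \rank J = if [forall i, J i 1 == J i0 1 * J i 0] then 1%N else 2%N.
Proof.
move=> h0; case: forallP => H.
  have eJ : J = col 0 J *m row i0 J.
    apply/matrixP => i k; rewrite !mxE big_ord1 !mxE.
    case: k => -[|[|//]] hk.
      by rewrite (_ : Ordinal hk = 0); [rewrite h0 mulr1 | apply/val_inj].
    by rewrite (_ : Ordinal hk = 1); [rewrite (eqP (H i)) mulrC | apply/val_inj].
  apply/eqP; rewrite eqn_leq; apply/andP; split.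
    by rewrite eJ mulmx_max_rank.
  rewrite lt0n mxrank_eq0; apply/eqP => J0.
  by move: h0; rewrite J0 mxE => /eqP; rewrite eq_sym oner_eq0.
have [j Hj] : exists j, J j 1 != J i0 1 * J j 0.
  by apply/existsP; rewrite -negb_forall; apply/negP => /forallP.
apply/eqP; rewrite eqn_leq rank_leq_col /=.
pose f (k : 'I_2) := if k == 0 then i0 else j.
have hM : \rank (rowsub f J) = 2%N.
  apply: mxrank_unit; rewrite unitmxE det2 !mxE /f /= h0 mul1r unitfE subr_eq0.
  by [].
by rewrite -[X in (X <= _)%N]hM mxrankS // rowsub_sub.
Qed.

Section Eval.
Variable R : realType.

Lemma coord_delta m (i : 'I_m) (j : nat) :
  Defs.coord (delta_mx 0 i : 'rV[R]_m) j = ((i : nat) == j)%:R.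
Proof.
rewrite /Defs.coord; case: insubP => [i' _ e|hj].
  by rewrite mxE /= -e eq_sym.
have /negbTE -> : (i : nat) != j by apply/eqP => e; move: hj; rewrite -e ltn_ord.
by [].
Qed.

Lemma coordZ m (a : R) (u : 'rV[R]_m) j : Defs.coord (a *: u) j = a * Defs.coord u j.
Proof. by rewrite /Defs.coord; case: insubP => [i _ _|_]; rewrite ?mxE ?mulr0. Qed.

Lemma sum_ind (N j : nat) (X : nat -> R) (P : nat -> bool) :
  (forall k, P k = (k == j)) ->
  \sum_(k < N) X k * (P k)%:R = if (j < N)%N then X j else 0.
Proof.
move=> hP; elim: N => [|N IH]; first by rewrite big_ord0.
rewrite big_ord_recr /= IH hP.
have [h1|h1] := ltnP j N; have [h2|h2] := ltnP j N.+1; have [e|e] := eqVneq N j;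
  rewrite ?mulr1 ?mulr0 ?addr0 ?add0r //; try by (exfalso; lia).
- by rewrite e.
Qed.

Arguments sum_ind : clear implicits.

Lemma sum_ind0 (N : nat) (X : nat -> R) (P : nat -> bool) :
  (forall k, P k = false) -> \sum_(k < N) X k * (P k)%:R = 0.
Proof. by move=> hP; apply: big1 => k _; rewrite hP mulr0. Qed.

Variable n : nat.
Hypothesis hn : (3 <= n)%N.
Local Notation N := (n - 2)%N.
Local Notation m := (2 * n - 3)%N.
Variable w : 'rV[R]_m.

Definition Pe (i k : nat) := (i == 2 * k)%N.
Definition Po (i k : nat) := (i == (2 * k).+1)%N.
Definition Pr (i k : nat) := (i == 2 * k.+1)%N.
Definition one (k : nat) : R := 1.

Definition pe (i : 'I_m) := perim (delta_mx 0 i : 'rV[R]_m).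
Definition ge (i : 'I_m) := Garea w (delta_mx 0 i : 'rV[R]_m).

Lemma pe_eq (i : 'I_m) : pe i = ((i : nat) == 0)%N%:R +
  \sum_(k < N) one k * (Po i k)%:R + ((i : nat) == 2 * N)%N%:R.
Proof.
rewrite /pe /perim /tt /xx !coord_delta; congr (_ + _ + _).
by apply: eq_bigr => k _; rewrite coord_delta /one mul1r.
Qed.

Lemma ge_eq (i : 'I_m) : ge i =
  \sum_(k < N) Dl w k * (Pe i k)%:R +
  \sum_(k < N) Dx w k * (Po i k)%:R +
  \sum_(k < N) Dr w k * (Pr i k)%:R.
Proof.
rewrite /ge /Garea -!big_split; apply: eq_bigr => k _.
by rewrite /tt /xx !coord_delta.
Qed.

Lemma m_eq : m = (2 * N).+1.
Proof. by move: hn; lia. Qed.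

Lemma case_odd (k : nat) (h : ((2 * k).+1 < m)%N) :
  pe (Ordinal h) = 1 /\ ge (Ordinal h) = Dx w k.
Proof.
have hk : (k < N)%N by move: h hn; lia.
split.
  rewrite pe_eq (sum_ind _ k _ _); last by move=> k'; rewrite /Pe /Po /Pr /=; apply/idP/idP => /eqP e; apply/eqP; lia.
  rewrite hk (_ : ((2 * k).+1 == 2 * N)%N = false).
    by rewrite add0r addr0 /one.
  by apply/negbTE/eqP; lia.
rewrite ge_eq sum_ind0; last by move=> k'; rewrite /Pe /Po /Pr /=; apply/negbTE/eqP; lia.
rewrite (sum_ind _ k _ _); last by move=> k'; rewrite /Pe /Po /Pr /=; apply/idP/idP => /eqP e; apply/eqP; lia.
rewrite sum_ind0; last by move=> k'; rewrite /Pe /Po /Pr /=; apply/negbTE/eqP; lia.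
by rewrite hk add0r addr0 /one.
Qed.

Lemma case_zero (h : (0 < m)%N) : pe (Ordinal h) = 1 /\ ge (Ordinal h) = Dl w 0.
Proof.
have hN : (0 < N)%N by move: hn; lia.
split.
  rewrite pe_eq sum_ind0; last by move=> k'; rewrite /Pe /Po /Pr /=; apply/negbTE/eqP; lia.
  rewrite (_ : (0 == 2 * N)%N = false); first by rewrite addr0 addr0.
  by apply/negbTE/eqP; lia.
rewrite ge_eq (sum_ind _ 0 _ _); last by move=> k'; rewrite /Pe /Po /Pr /=; apply/idP/idP => /eqP e; apply/eqP; lia.
rewrite sum_ind0; last by move=> k'; rewrite /Pe /Po /Pr /=; apply/negbTE/eqP; lia.
rewrite sum_ind0; last by move=> k'; rewrite /Pe /Po /Pr /=; apply/negbTE/eqP; lia.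
by rewrite hN !addr0.
Qed.

Lemma case_last (h : (2 * N < m)%N) : pe (Ordinal h) = 1 /\ ge (Ordinal h) = Dr w N.-1.
Proof.
have hN : (0 < N)%N by move: hn; lia.
split.
  rewrite pe_eq sum_ind0; last by move=> k'; rewrite /Pe /Po /Pr /=; apply/negbTE/eqP; lia.
  rewrite (_ : (2 * N == 0)%N = false); first by rewrite /= eqxx !add0r.
  by apply/negbTE/eqP; lia.
rewrite ge_eq (sum_ind _ N _ _); last by move=> k'; rewrite /Pe /Po /Pr /=; apply/idP/idP => /eqP e; apply/eqP; lia.
rewrite ltnn sum_ind0; last by move=> k'; rewrite /Pe /Po /Pr /=; apply/negbTE/eqP; lia.
rewrite (sum_ind _ N.-1 _ _); last by move=> k'; rewrite /Pe /Po /Pr /=; apply/idP/idP => /eqP e; apply/eqP; lia.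
by rewrite (_ : (N.-1 < N)%N) ?add0r //; lia.
Qed.

Lemma case_mid (k : nat) (h : (2 * k < m)%N) : (0 < k < N)%N ->
  pe (Ordinal h) = 0 /\ ge (Ordinal h) = Dl w k + Dr w k.-1.
Proof.
case: k h => [//|k] h /= hk.
have h1 : (k.+1 < N)%N by [].
have h2 : (k < N)%N by apply: ltn_trans h1.
split.
  rewrite pe_eq sum_ind0; last by move=> k'; rewrite /Pe /Po /Pr /=; apply/negbTE/eqP; lia.
  have e1 : (nat_of_ord (Ordinal h) == 0)%N = false by apply/negbTE; rewrite /=; lia.
  have e2 : (nat_of_ord (Ordinal h) == 2 * N)%N = false by apply/negbTE; rewrite /=; lia.
  by rewrite e1 e2 !addr0.
rewrite ge_eq (sum_ind _ k.+1 _ _); last by move=> k'; rewrite /Pe /Po /Pr /=; apply/idP/idP => /eqP e; apply/eqP; lia.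
rewrite sum_ind0; last by move=> k'; rewrite /Pe /Po /Pr /=; apply/negbTE/eqP; lia.
rewrite (sum_ind _ k _ _); last by move=> k'; rewrite /Pe /Po /Pr /=; apply/idP/idP => /eqP e; apply/eqP; lia.
by rewrite h1 h2 addr0.
Qed.


Lemma forall_Cond (h0 : (0 < m)%N) :
  (forall i : 'I_m, ge i = ge (Ordinal h0) * pe i) <-> Cond w N.
Proof.
have [_ g0] := case_zero h0.
rewrite g0; split => H.
  split.
    move=> k hk; have h : ((2 * k).+1 < m)%N by move: hk hn; lia.
    by have [p1 g1] := case_odd h; rewrite -g1 H p1 mulr1.
  split.
    have h : (2 * N < m)%N by move: hn; lia.
    by have [p1 g1] := case_last h; rewrite -g1 H p1 mulr1.
  move=> k hk; have h : (2 * k < m)%N by move: hk hn; lia.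
  by have [p1 g1] := case_mid h hk; rewrite addrC -g1 H p1 mulr0.
move=> i.
have hv := odd_double_half i.
have hi := ltn_ord i.
move: hv; rewrite -mul2n; set k := i./2 => hv.
case hodd : (odd i) hv => /= hv.
  have h : ((2 * k).+1 < m)%N by move: hi; lia.
  have -> : i = Ordinal h by apply/val_inj; rewrite /=; lia.
  have hkN : (k < N)%N by move: (h) hn; lia.
  have [p1 g1] := case_odd h; rewrite p1 g1 mulr1.
  by case: H => H _; apply: H.
have h : (2 * k < m)%N by move: hi; lia.
have -> : i = Ordinal h by apply/val_inj; rewrite /=; lia.
have hk : (k <= N)%N by move: h hn; lia.
case: (posnP k) => hk0.
  have -> : Ordinal h = Ordinal h0 by apply/val_inj; rewrite /= hk0.
  by have [p1 _] := case_zero h0; rewrite p1 mulr1.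
case: (ltnP k N) => hkN.
  have hk' : (0 < k < N)%N by rewrite hk0 hkN.
  have [p1 g1] := case_mid h hk'.
  by rewrite p1 g1 mulr0; case: H => _ [_ H]; rewrite addrC; apply: H.
have ek : k = N by apply/eqP; rewrite eqn_leq hk hkN.
have h' : (2 * N < m)%N by move: hn; lia.
have -> : Ordinal h = Ordinal h' by apply/val_inj; rewrite /= ek.
have [p1 g1] := case_last h'.
by rewrite p1 g1 mulr1; case: H => _ [H _].
Qed.

End Eval.


Section Main.
Variable R : realType.
Variable n : nat.
Hypothesis hn : (3 <= n)%N.
Local Notation N := (n - 2)%N.
Local Notation m := (2 * n - 3)%N.

Lemma m_gt0 : (0 < m)%N.
Proof. by move: hn; lia. Qed.

Lemma perimZ (a : R) (v : 'rV[R]_m) : perim (a *: v) = a * perim v.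
Proof.
rewrite /perim /tt /xx !coordZ !mulrDr mulr_sumr; congr (_ + _ + _).
by apply: eq_bigr => k _; rewrite coordZ.
Qed.

Lemma GareaZ (w : 'rV[R]_m) (a : R) (v : 'rV[R]_m) : Garea w (a *: v) = a * Garea w v.
Proof.
rewrite /Garea mulr_sumr; apply: eq_bigr => k _.
rewrite /tt /xx !coordZ; ring.
Qed.

Lemma part1 (w : 'rV[R]_m) : Omega w ->
  (differentiable (@perim R n) w /\ forall y : R, exists v, 'd (@perim R n) w v = y) /\
  (differentiable (@area R n) w /\ forall y : R, exists v, 'd (@area R n) w v = y).
Proof.
move=> hw.
have h0 := m_gt0.
split.
  have Hp := is_diff_perim w.
  split; first exact: (@ex_diff _ _ _ _ _ _ _ Hp).
  move=> y; exists (y *: delta_mx 0 (Ordinal h0)).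
  rewrite diff_val perimZ.
  by have [p1 _] := case_zero hn w h0; rewrite /pe in p1; rewrite p1 mulr1.
have Ha := is_diff_area hw.
split; first exact: (@ex_diff _ _ _ _ _ _ _ Ha).
have h1 : ((2 * 0).+1 < m)%N by move: hn; lia.
have [_ g0] := case_zero hn w h0.
have [_ g1] := case_odd hn w h1.
rewrite /ge in g0 g1.
have hN : (0 < N)%N by move: hn; lia.
have : Dl w 0 != 0 \/ Dx w 0 != 0.
  case: (eqVneq (Dl w 0) 0) => e0; last by left.
  case: (eqVneq (Dx w 0) 0) => e1; last by right.
  exfalso.
  have t0 := O_t hn hw (leq0n N).
  have t1 := O_t hn hw (hN : (1 <= N)%N).
  have x0 := O_x hw hN.
  have S0 := Sq_pos hw hN.
  have t0' : tt w 0 != 0 by apply: lt0r_neq0.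
  have x0' : xx w 0 != 0 by apply: lt0r_neq0.
  have S0' : Sq w 0 != 0 by apply: lt0r_neq0.
  have f0 : xx w 0 ^+ 2 + tt w 1 ^+ 2 - tt w 0 ^+ 2 = Dl w 0 * (2 * Sq w 0) / tt w 0.
    by rewrite /Dl; field; rewrite t0' S0'.
  have f1 : tt w 0 ^+ 2 + tt w 1 ^+ 2 - xx w 0 ^+ 2 = Dx w 0 * (2 * Sq w 0) / xx w 0.
    by rewrite /Dx; field; rewrite x0' S0'.
  rewrite e0 e1 !mul0r in f0 f1.
  nra.
case=> hd y.
  exists ((y / Dl w 0) *: delta_mx 0 (Ordinal h0)).
  by rewrite diff_val GareaZ g0 divfK.
exists ((y / Dx w 0) *: delta_mx 0 (Ordinal h1)).
by rewrite diff_val GareaZ g1 divfK.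
Qed.

Lemma J_eq (w : 'rV[R]_m) : Omega w -> 'J (@Psi R n) w = lin1_mx (DPsi w).
Proof. by move=> hw; have H := is_diff_Psi hw; rewrite /jacobian diff_val. Qed.

Lemma part2 (w : 'rV[R]_m) : Omega w ->
  differentiable (@Psi R n) w /\
  \rank ('J (@Psi R n) w) = (if `[< regular w >] then 1 else 2)%N.
Proof.
move=> hw; have HP := is_diff_Psi hw.
split; first exact: (@ex_diff _ _ _ _ _ _ _ HP).
have h0 := m_gt0.
rewrite J_eq //.
have E0 : forall i, lin1_mx (DPsi w) i 0 = pe R i.
  by move=> i; rewrite mxE /DPsi /ee !mxE /= mulr1 mulr0 addr0.
have E1 : forall i, lin1_mx (DPsi w) i 1 = ge w i.
  by move=> i; rewrite mxE /DPsi /ee !mxE /= mulr1 mulr0 add0r.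
rewrite (rank_m2 (i0 := Ordinal h0)); last by rewrite E0; case: (case_zero hn w h0).
congr (if _ then _ else _).
apply/forallP/asboolP.
  move=> H; apply/(Cond_iff hn hw); apply/(forall_Cond hn w h0) => i.
  by have := H i; rewrite !E0 !E1 => /eqP.
move/(Cond_iff hn hw)/(forall_Cond hn w h0) => H i.
by rewrite !E0 !E1 H.
Qed.

End Main.


Section Cont.
Variable R : realType.
Variable m : nat.
Local Notation V := 'rV[R]_m.

Definition ctn (f : V -> R) (w : V) := f x @[x --> w] --> f w.

Lemma ct_add (A B : V -> R) w : ctn A w -> ctn B w -> ctn (fun v => A v + B v) w.
Proof. move=> hA hB; have H := cvgD hA hB; rewrite /ctn; apply: H. Qed.

Lemma ct_opp (A : V -> R) w : ctn A w -> ctn (fun v => - A v) w.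
Proof. move=> hA; have H := cvgN hA; rewrite /ctn; apply: H. Qed.

Lemma ct_sub (A B : V -> R) w : ctn A w -> ctn B w -> ctn (fun v => A v - B v) w.
Proof. move=> hA hB; have H := cvgB hA hB; rewrite /ctn; apply: H. Qed.

Lemma ct_mul (A B : V -> R) w : ctn A w -> ctn B w -> ctn (fun v => A v * B v) w.
Proof. move=> hA hB; have H := cvgM hA hB; rewrite /ctn; apply: H. Qed.

Lemma ct_inv (A : V -> R) w : A w != 0 -> ctn A w -> ctn (fun v => (A v)^-1) w.
Proof. move=> h hA; have H := cvgV h hA; rewrite /ctn; apply: H. Qed.

Lemma ct_cst (c : R) w : ctn (fun _ => c) w.
Proof. by rewrite /ctn; apply: cvg_cst; apply: nbhs_filter. Qed.

Lemma ct_diff (f df : V -> R) w : is_diff w f df -> ctn f w.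
Proof. by move=> H; apply: differentiable_continuous; exact: (@ex_diff _ _ _ _ _ _ _ H). Qed.

Lemma ct_coord j w : ctn (fun v => Defs.coord v j) w.
Proof. exact: ct_diff (is_diff_coord j w). Qed.

Lemma ct_acos (A : V -> R) w : -1 < A w < 1 -> ctn A w -> ctn (fun v => acos (A v)) w.
Proof. by move=> h hA; apply: (continuous_cvg (nbhs_filter w) (continuous_acos h) hA). Qed.

Lemma ct_sum (K : nat) (F : nat -> V -> R) w :
  (forall k, (k < K)%N -> ctn (F k) w) -> ctn (fun v => \sum_(k < K) F k v) w.
Proof.
elim: K => [|K IH] H.
  have e : (fun v : V => \sum_(k < 0) F k v) = fun _ => 0 by apply/funext => v; rewrite big_ord0.
  by rewrite e; apply: ct_cst.
have e : (fun v : V => \sum_(k < K.+1) F k v) = fun v => \sum_(k < K) F k v + F K v.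
  by apply/funext => v; rewrite big_ord_recr.
rewrite e; apply: ct_add; first by apply: IH => k hk; apply: H; apply: ltnW.
exact: H.
Qed.

Lemma ct_near_gt (f : V -> R) w : ctn f w -> 0 < f w -> \forall v \near w, 0 < f v.
Proof. by move=> hf h; apply: (cvgr_gt (f w) hf 0 h). Qed.

Lemma ct_near_lt (f : V -> R) w (c : R) : ctn f w -> f w < c -> \forall v \near w, f v < c.
Proof. by move=> hf h; apply: (cvgr_lt (f w) hf c h). Qed.

Lemma ct_near_neq (f g : V -> R) w : ctn f w -> ctn g w -> f w != g w ->
  \forall v \near w, f v != g v.
Proof.
move=> hf hg h.
have := cvgr_neq0 _ (ct_sub hf hg); rewrite subr_eq0 => /(_ (nbhs_filter w) h).
by apply: filterS => v; rewrite subr_eq0.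
Qed.

Lemma nS2 (w : V) (P Q S : V -> Prop) : (\forall v \near w, P v) ->
  (\forall v \near w, Q v) -> (forall v, P v -> Q v -> S v) -> \forall v \near w, S v.
Proof. by move=> hP hQ h; exact: (filterS2 (nbhs_filter w) h hP hQ). Qed.

End Cont.

Section Open.
Variable R : realType.
Variable n : nat.
Hypothesis hn : (3 <= n)%N.
Local Notation N := (n - 2)%N.
Local Notation m := (2 * n - 3)%N.
Local Notation V := 'rV[R]_m.

Lemma ct_pow2 (A : V -> R) w : ctn A w -> ctn (fun v => A v ^+ 2) w.
Proof.
move=> hA; have e : (fun v => A v ^+ 2) = fun v => A v * A v by apply/funext => v; rewrite expr2.
by rewrite e; apply: ct_mul.
Qed.

Lemma ct_tt k w : ctn (fun v : V => tt v k) w.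
Proof. exact: ct_coord. Qed.
Lemma ct_xx k w : ctn (fun v : V => xx v k) w.
Proof. exact: ct_coord. Qed.

Lemma ct_Sq k (w : V) : inV (tt w k) (xx w k) (tt w k.+1) -> ctn (fun v => Sq v k) w.
Proof.
move=> hi.
have Hh := is_diff_heron (is_diff_coord (2 * k) w) (is_diff_coord (2 * k).+1 w)
   (is_diff_coord (2 * k.+1) w).
have hp : 0 < heron (tt w k) (xx w k) (tt w k.+1) by apply: heron_pos.
exact: ct_diff (is_diff_sqrt Hh hp).
Qed.

Lemma ct_D k (w : V) (A : V -> R) : inV (tt w k) (xx w k) (tt w k.+1) ->
  ctn A w -> ctn (fun v => A v / (2 * Sq v k)) w.
Proof.
move=> hi hA; apply: ct_mul => //; apply: ct_inv.
  by rewrite mulf_neq0 ?pnatr_eq0 // lt0r_neq0 // sqrtr_gt0 heron_pos.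
by apply: ct_mul; [apply: ct_cst | apply: ct_Sq].
Qed.

Lemma ct_Dx k (w : V) : inV (tt w k) (xx w k) (tt w k.+1) -> ctn (fun v => Dx v k) w.
Proof.
move=> hi; rewrite /Dx; apply: ct_D => //.
apply: ct_mul; first exact: ct_xx.
by apply: ct_sub; [apply: ct_add|]; apply: ct_pow2; [apply: ct_tt|apply: ct_tt|apply: ct_xx].
Qed.

Lemma ct_Dl k (w : V) : inV (tt w k) (xx w k) (tt w k.+1) -> ctn (fun v => Dl v k) w.
Proof.
move=> hi; rewrite /Dl; apply: ct_D => //.
apply: ct_mul; first exact: ct_tt.
by apply: ct_sub; [apply: ct_add|]; apply: ct_pow2; [apply: ct_xx|apply: ct_tt|apply: ct_tt].
Qed.

Lemma ct_Dr k (w : V) : inV (tt w k) (xx w k) (tt w k.+1) -> ctn (fun v => Dr v k) w.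
Proof.
move=> hi; rewrite /Dr; apply: ct_D => //.
apply: ct_mul; first exact: ct_tt.
by apply: ct_sub; [apply: ct_add|]; apply: ct_pow2; [apply: ct_tt|apply: ct_xx|apply: ct_tt].
Qed.

Lemma ct_alpha k (w : V) : inV (tt w k) (xx w k) (tt w k.+1) ->
  ctn (fun v => alpha (tt v k) (xx v k) (tt v k.+1)) w.
Proof.
move=> hi; rewrite /alpha; apply: ct_acos; first exact: (cosarg_bound hi).
apply: ct_mul; last apply: ct_inv.
- by apply: ct_sub; [apply: ct_add|]; apply: ct_pow2; [apply: ct_tt|apply: ct_tt|apply: ct_xx].
- by case: hi => [[h1 _] [_ [h3 _]]]; rewrite !mulf_neq0 ?pnatr_eq0 // lt0r_neq0.
- by apply: ct_mul; [apply: ct_mul; [apply: ct_cst|apply: ct_tt]|apply: ct_tt].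
Qed.

Lemma near_forall_lt (K : nat) (P : nat -> V -> Prop) (w : V) :
  (forall k, (k < K)%N -> \forall v \near w, P k v) ->
  \forall v \near w, forall k, (k < K)%N -> P k v.
Proof.
elim: K => [|K IH] H.
  by apply: (nearW (nbhs_filter w)) => v k.
apply: (nS2 (IH (fun k hk => H k (ltnW hk))) (H K (ltnSn K))) => v h1 h2 k hk.
case: (ltnP k K) => hk'; first exact: h1.
by have -> : k = K by apply/eqP; rewrite eqn_leq hk'; rewrite ltnS in hk; rewrite hk.
Qed.

Lemma ct_coordf (i : 'I_m) (w : V) : ctn (fun v : V => v ord0 i) w.
Proof. exact: differentiable_continuous (differentiable_coord _ _ _). Qed.

Lemma Omega_near (w : V) : Omega w -> \forall v \near w, Omega v.
Proof.
move=> hw; have hw' := hw; case: hw' => hpos [hinV hsum].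
have H1 : \forall v \near w, forall i : 'I_m, 0 < (v : V) ord0 i.
  by apply: (filter_forall (nbhs_filter w)) => i; apply: ct_near_gt => //; exact: ct_coordf.
have H2 : \forall v \near w, forall k, (k < N)%N -> inV (tt (v : V) k) (xx v k) (tt v k.+1).
  apply: near_forall_lt => k hk.
  have hi := hinV k hk.
  have [[a1 a2] [[b1 b2] [c1 c2]]] := hi.
  have g1 := ct_near_gt (ct_tt (k:=k) (w:=w)) a1.
  have g2 := ct_near_gt (ct_xx (k:=k) (w:=w)) b1.
  have g3 := ct_near_gt (ct_tt (k:=k.+1) (w:=w)) c1.
  have g4 : \forall v \near w, 0 < xx (v : V) k + tt v k.+1 - tt v k.
    by apply: ct_near_gt; [apply: ct_sub; [apply: ct_add|]; [apply: ct_xx|apply: ct_tt|apply: ct_tt] | lra].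
  have g5 : \forall v \near w, 0 < tt (v : V) k + tt v k.+1 - xx v k.
    by apply: ct_near_gt; [apply: ct_sub; [apply: ct_add|]; [apply: ct_tt|apply: ct_tt|apply: ct_xx] | lra].
  have g6 : \forall v \near w, 0 < tt (v : V) k + xx v k - tt v k.+1.
    by apply: ct_near_gt; [apply: ct_sub; [apply: ct_add|]; [apply: ct_tt|apply: ct_xx|apply: ct_tt] | lra].
  near=> v.
  have f1 : 0 < tt v k by near: v.
  have f2 : 0 < xx v k by near: v.
  have f3 : 0 < tt v k.+1 by near: v.
  have f4 : 0 < xx v k + tt v k.+1 - tt v k by near: v.
  have f5 : 0 < tt v k + tt v k.+1 - xx v k by near: v.
  have f6 : 0 < tt v k + xx v k - tt v k.+1 by near: v.
  split; [split|split; [split|split]]; lra.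
have H3 : \forall v \near w, \sum_(k < N) alpha (tt (v : V) k) (xx v k) (tt v k.+1) < 2 * pi.
  apply: (ct_near_lt (f := fun v : V => \sum_(k < N) alpha (tt v k) (xx v k) (tt v k.+1)) _ hsum).
  apply: (ct_sum (F := fun k (v : V) => alpha (tt v k) (xx v k) (tt v k.+1))) => k hk; apply: ct_alpha; exact: hinV.
near=> v; split; [|split].
- by near: v.
- by near: v.
- by near: v.
Unshelve. all: by end_near.
Qed.

Lemma notCond_near (w : V) : Omega w -> ~ Cond w N -> \forall v \near w, ~ Cond v N.
Proof.
move=> hw hc.
have hN : (0 < N)%N by move: hn; lia.
have hiv k : (k < N)%N -> inV (tt w k) (xx w k) (tt w k.+1) by case: hw => _ [h _]; apply: h.
have hl0 := ct_Dl (hiv 0%N hN).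
move/not_andP: hc => [|/not_andP[]].
- move/existsNP => [k /not_implyP [hk /eqP hne]].
  apply: filterS (ct_near_neq (ct_Dx (hiv k hk)) hl0 hne) => v /eqP hv [h _].
  by apply: hv; apply: h.
- move/eqP => hne.
  have hN' : (N.-1 < N)%N by rewrite ltn_predL.
  apply: filterS (ct_near_neq (ct_Dr (hiv _ hN')) hl0 hne) => v /eqP hv [_ [h _]].
  by apply: hv.
- move/existsNP => [k /not_implyP [hk /eqP hne]].
  have hk1 : (k < N)%N by case/andP: hk.
  have hk2 : (k.-1 < N)%N by move: hk1; lia.
  have := ct_near_neq (ct_add (ct_Dr (hiv _ hk2)) (ct_Dl (hiv _ hk1))) (ct_cst (c := 0) (w := w)) hne.
  apply: filterS => v /eqP hv [_ [_ h]].
  by apply: hv; apply: h.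
Qed.

Lemma part3 : open [set w : V | Omega w /\ ~ regular w].
Proof.
rewrite openE => w [hw hnr].
have hnc : ~ Cond w N by move/(Cond_iff hn hw).
apply: (nS2 (Omega_near hw) (notCond_near hw hnc)) => v hv hc.
split => // hr; apply: hc; exact/(Cond_iff hn hv).
Qed.

End Open.


Theorem theorem3p2 (R : realType) (n : nat) (hn : (3 <= n)%N) :
  (* (1) p and A are submersions on Omega_n *)
  (forall w : 'rV[R]_(2 * n - 3), Omega w ->
     (differentiable (@perim R n) w /\ forall y : R, exists v, 'd (@perim R n) w v = y) /\
     (differentiable (@area R n) w /\ forall y : R, exists v, 'd (@area R n) w v = y)) /\
  (* (2) rank of dPsi is 1 at regular polygons and 2 otherwise *)
  (forall w : 'rV[R]_(2 * n - 3), Omega w ->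
     differentiable (@Psi R n) w /\
     \rank ('J (@Psi R n) w) = (if `[< regular w >] then 1 else 2)%N) /\
  (* the set of non-regular configurations is open *)
  open [set w : 'rV[R]_(2 * n - 3) | Omega w /\ ~ regular w].
Proof.
split; first by move=> w hw; exact: (part1 hn hw).
split; first by move=> w hw; exact: (part2 hn hw).
exact: (part3 hn).
Qed.
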